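(* Let $n\ge 2$ and let $\mathsf{T}$ be a string of length $n$ over $\{\mathtt{a},\mathtt{b}\}$ ($\mathtt{a}<\mathtt{b}$) whose suffix array $P=\mathsf{SA}_{\mathsf{T}}=[p_1,\ldots,p_n]$ is an arithmetically progressed permutation with ratio $k$ and $p_1=1$. Let $m$ be the number of occurrences of $\mathtt{a}$ in $\mathsf{T}$ and let $\mathsf{T}'=\mathsf{T}[2..n]\mathsf{T}[1]$. Then $\mathsf{SA}_{\mathsf{T}'}[i]=p_i-1\bmod n$ for all $i$, and this sequence equals the $m$-th cyclic rotation of $P$, i.e. $\mathsf{SA}_{\mathsf{T}'}[i]=P[(i+m)\bmod n]$ for all $i\in[1..n]$; in particular $\mathsf{SA}_{\mathsf{T}'}[1]=n$ and $\mathsf{SA}_{\mathsf{T}'}$ is arithmetically progressed with ratio $k$. Moreover $\mathsf{BWT}_{\mathsf{T}}=\mathsf{BWT}_{\mathsf{T}'}$.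
   Context: Lexicographic order with a proper prefix smaller than the longer string; suffix array $\mathsf{SA}_{\mathsf{T}}$: permutation of $[1..n]$ such that $\mathsf{T}[\mathsf{SA}_{\mathsf{T}}[i]..n]$ is the $i$-th smallest suffix. $x\bmod n$ denotes the representative of $x$ modulo $n$ in $[1..n]$. An arithmetically progressed permutation of length $n$ with ratio $k\in[1..n-1]$ is a permutation $P=[p_1,\ldots,p_n]$ of $[1..n]$ with $p_{i+1}=p_i+k\bmod n$. BWT: $\mathsf{BWT}_{\mathsf{T}}[i]=\mathsf{T}[\mathsf{SA}_{\mathsf{T}}[i]-1\bmod n]$. *)

(* Defs.v *)
From mathcomp Require Import all_boot.
Set Implicit Arguments. Unset Strict Implicit. Unset Printing Implicit Defensive.

(* Strings over {a,b} are [seq bool] with a := false, b := true (so a < b).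
   Positions and suffix-array entries are 1-based as in the paper. *)

Fixpoint lexlt (s t : seq bool) : bool :=
  match s, t with
  | [::], [::] => false
  | [::], _ :: _ => true
  | _ :: _, [::] => false
  | x :: s', y :: t' => (~~ x && y) || ((x == y) && lexlt s' t')
  end.

Definition lexle (s t : seq bool) : bool := (s == t) || lexlt s t.

Definition suffix (T : seq bool) (j : nat) : seq bool := drop j.-1 T.

Definition SA (T : seq bool) : seq nat :=
  sort (fun i j => lexle (suffix T i) (suffix T j)) (iota 1 (size T)).

Definition modr (n x : nat) : nat := if x %% n == 0 then n else x %% n.

Definition at1 (P : seq nat) (i : nat) : nat := nth 0 P i.-1.
Definition chr (T : seq bool) (j : nat) : bool := nth false T j.-1.

Definition AP_perm (n k : nat) (P : seq nat) : Prop :=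
  [/\ perm_eq P (iota 1 n), 1 <= k <= n.-1 &
      forall i, 1 <= i < n -> at1 P i.+1 = modr n (at1 P i + k)].

Definition BWT (T : seq bool) : seq bool :=
  [seq chr T (modr (size T) (p.-1)) | p <- SA T].

(* Main.v *)
Require Import Defs.
From mathcomp Require Import all_boot zify.
Set Implicit Arguments. Unset Strict Implicit. Unset Printing Implicit Defensive.
Local Notation suffix := Defs.suffix.

Lemma lexlt_irr s : lexlt s s = false.
Proof. by elim: s => //= x s ->; rewrite eqxx; case: x. Qed.

Lemma lexlt_trans s t u : lexlt s t -> lexlt t u -> lexlt s u.
Proof.
elim: s t u => [|x s IH] [|y t] [|z u] //=.
case: x; case: y; case: z => //=; rewrite ?eqxx //=; exact: IH.
Qed.

Lemma lexlt_asym s t : lexlt s t -> lexlt t s = false.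
Proof. by move=> h; apply/negbTE/negP => /(lexlt_trans h); rewrite lexlt_irr. Qed.

Lemma lexlt_total s t : s != t -> lexlt s t || lexlt t s.
Proof.
elim: s t => [|x s IH] [|y t] //=.
rewrite eqseq_cons; case: x; case: y => //=; exact: IH.
Qed.

Lemma lexle_refl s : lexle s s.
Proof. by rewrite /lexle eqxx. Qed.

Lemma lexle_trans s t u : lexle s t -> lexle t u -> lexle s u.
Proof.
rewrite /lexle => /orP[/eqP->//|h1] /orP[/eqP<-|h2]; first by rewrite h1 orbT.
by rewrite (lexlt_trans h1 h2) orbT.
Qed.

Lemma lexle_total s t : lexle s t || lexle t s.
Proof.
case: (eqVneq s t) => [->|/lexlt_total]; first by rewrite lexle_refl.
by rewrite /lexle; case/orP=> ->; rewrite !orbT.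
Qed.

Lemma lexle_anti s t : lexle s t -> lexle t s -> s = t.
Proof.
rewrite /lexle => /orP[/eqP//|h] /orP[/eqP//|h'].
by rewrite (lexlt_asym h) in h'.
Qed.

Lemma lexlt_rcons s t : lexlt (rcons s false) (rcons t false) = lexlt s t.
Proof.
elim: s t => [|x s IH] [|y t] //=.
- by case: y => //=; case: t.
- by rewrite andbF /=; case: s {IH} => [|? ?]; rewrite /= andbF.
- by rewrite IH.
Qed.

Lemma lexle_rcons s t : lexle (rcons s false) (rcons t false) = lexle s t.
Proof. by rewrite /lexle lexlt_rcons eqseq_rcons eqxx andbT. Qed.

Lemma modr_mod n x : 0 < n -> modr n x %% n = x %% n.
Proof. by move=> n0; rewrite /modr; case: eqP => [->|_]; rewrite ?modnn ?modn_mod. Qed.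

Lemma modr_eq n x y : x %% n = y %% n -> modr n x = modr n y.
Proof. by rewrite /modr => ->. Qed.

Lemma modr_range n x : 0 < n -> 0 < modr n x <= n.
Proof.
move=> n0; rewrite /modr; case: eqP => [_|h]; first by rewrite n0 leqnn.
by rewrite lt0n (introN eqP h) ltnW // ltn_pmod.
Qed.

Lemma modr_small n x : 0 < x <= n -> modr n x = x.
Proof.
case/andP=> x0 xn; rewrite /modr; case: (ltngtP x n) xn => // [xn _|-> _].
  by rewrite modn_small //; case: eqP x0 => // ->.
by rewrite modnn eqxx.
Qed.

Lemma mod_pred n a b : 0 < a -> 0 < b -> a = b %[mod n] -> a.-1 = b.-1 %[mod n].
Proof.
move=> a0 b0 h; apply/eqP; rewrite -(eqn_modDr 1) !addn1 !prednK //; exact/eqP.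
Qed.

Lemma lexle2_true x y r : lexle [:: x, y & r] [:: true] = ~~ x.
Proof. by rewrite /lexle /=; case: x. Qed.
Lemma lexle2_false x y r : lexle [:: x, y & r] [:: false] = false.
Proof. by rewrite /lexle /=; case: x. Qed.
Lemma lexle_true2 x y r : lexle [:: true] [:: x, y & r] = x.
Proof. by rewrite /lexle /=; case: x; rewrite ?andbF. Qed.
Lemma lexle_false1 y w : lexle [:: false] (y :: rcons w false).
Proof. by rewrite /lexle /=; case: y => //=; case: w. Qed.
Lemma lexle_rcons_false y z : lexle (rcons (y :: z) false) [:: false] = false.
Proof. by case: z => [|c z] /=; rewrite ?lexle2_false //; case: z. Qed.

Lemma suffix2 (T : seq bool) p : 1 <= p -> p < size T ->
  suffix T p = [:: chr T p, nth false T p & drop p.+1 T].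
Proof.
move=> p1 pn; rewrite /suffix /chr (drop_nth false) ?prednK //; last by lia.
by rewrite (drop_nth false).
Qed.

Lemma size_sfx (T : seq bool) p : 1 <= p -> size (suffix T p) = size T - p.-1.
Proof. by rewrite /suffix size_drop. Qed.

Lemma map_pred_iota a b : map predn (iota a.+1 b) = iota a b.
Proof. by elim: b a => //= b IH a; rewrite IH. Qed.

Lemma count_lt_iota j n : count (fun i => i < j) (iota 0 n) = minn j n.
Proof.
elim: n => [|n IH]; first by rewrite minn0.
by rewrite -addn1 iotaD count_cat IH /= add0n; lia.
Qed.

Theorem lemma8 (n k : nat) (T : seq bool) :
  2 <= n -> size T = n ->
  AP_perm n k (SA T) -> at1 (SA T) 1 = 1 ->
  let m := count (fun c => ~~ c) T in
  let T' := rot 1 T in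
  (forall i, 1 <= i <= n -> at1 (SA T') i = modr n (at1 (SA T) i).-1) /\
  (forall i, 1 <= i <= n -> at1 (SA T') i = at1 (SA T) (modr n (i + m))) /\
  at1 (SA T') 1 = n /\
  AP_perm n k (SA T') /\
  BWT T = BWT T'.
Proof.
move=> n2 sT [Hperm Hk Hrec] H1 m T'.
have n0 : 0 < n by lia.
have [s Es] : {s | SA T = s} by exists (SA T).
rewrite Es in Hperm H1 Hrec *.
have ss : size s = n by rewrite -Es /SA size_sort size_iota.
have smem : forall p, (p \in s) = (1 <= p <= n).
  by move=> p; rewrite (perm_mem Hperm) mem_iota add1n ltnS.
set e := fun i j => lexle (suffix T i) (suffix T j).
have etr : transitive e by move=> a b c; apply: lexle_trans.
have etot : total e by move=> a b; apply: lexle_total.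
have sorted_s : sorted e s by rewrite -Es; apply: sort_sorted.
have [s' s_eq] : exists s', s = 1 :: s'.
  move: H1 ss; rewrite /at1 /=; case: (s) => [|a s'] /=; first by lia.
  by move=> -> _; exists s'.
have Hmin : forall j, 1 <= j <= n -> lexle T (suffix T j).
  have sf1 : suffix T 1 = T by rewrite /suffix drop0.
  move=> j; rewrite -smem s_eq inE => /orP[/eqP->|js]; first by rewrite sf1 lexle_refl.
  move: sorted_s; rewrite s_eq /= => /(order_path_min etr) /allP /(_ j js).
  by rewrite /e sf1.
have [x [y [r' Tr]]] : exists x y r', T = [:: x, y & r'].
  by case: (T) sT => [|x [|y r']] /=; try lia; exists x, y, r'.
have HTn : suffix T n = [:: chr T n].
  have nT : n.-1 < size T by rewrite sT; lia.
  by rewrite /suffix /chr (drop_nth false nT) prednK // drop_oversize ?sT.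
have hx : x = false /\ chr T n = true.
  move: (Hmin n); rewrite HTn n0 leqnn Tr => /(_ isT).
  by case: (chr _ n); rewrite ?lexle2_true ?lexle2_false //; case: (x).
case: hx => hx hTn; subst x.
set r := y :: r'.
have Tr2 : T = false :: r by [].
have sr : size r = n.-1 by rewrite -sT Tr2.
have TT' : T' = rcons r false by rewrite /T' Tr2 rot1_cons.
pose f p := modr n p.-1.
have G1 : suffix T' (f 1) = [:: false].
  rewrite /f /= /modr mod0n eqxx TT' /suffix drop_rcons ?sr //.
  by rewrite -sr drop_size.
have G2 : forall i, 2 <= i <= n -> suffix T' (f i) = rcons (suffix T i) false.
  move=> i /andP[i2 iN]; rewrite /f modr_small; last by lia.
  rewrite TT' /suffix Tr2 drop_rcons; last by rewrite sr; lia.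
  by case: i i2 {iN} => [|[|i]].
have sfx_sz : forall i, 1 <= i <= n -> size (suffix T i) = n - i.-1.
  by move=> i /andP[i1 _]; rewrite size_sfx // sT.
have Hord : forall i j, 1 <= i <= n -> 1 <= j <= n ->
    lexle (suffix T' (f i)) (suffix T' (f j)) = e i j.
  move=> i j hi hj; rewrite /e.
  have [i1|i2] : i = 1 \/ 2 <= i by lia.
  - have [j1|j2] : j = 1 \/ 2 <= j by lia.
    + by subst i j; rewrite !lexle_refl.
    + subst i; rewrite G1 G2 ?j2 ?(andP hj).2 //.
      have sf1 : suffix T 1 = T by rewrite /suffix drop0.
      rewrite sf1 Hmin //.
      case E: (suffix T j) (sfx_sz j hj) => [|z w] /=; first by lia.
      by rewrite lexle_false1.
  - have [j1|j2] : j = 1 \/ 2 <= j by lia.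
    + subst j; rewrite G1 G2 ?i2 ?(andP hi).2 //.
      case E: (suffix T i) (sfx_sz i hi) => [|z w] /=; first by lia.
      rewrite lexle_rcons_false -E; symmetry; apply/negbTE/negP => h.
      have sf1 : suffix T 1 = T by rewrite /suffix drop0.
      rewrite sf1 in h.
      have := lexle_anti h (Hmin i hi) => /(congr1 size).
      by rewrite sfx_sz // sT; lia.
    + by rewrite G2 ?i2 ?(andP hi).2 // G2 ?j2 ?(andP hj).2 // lexle_rcons.
have sT' : size T' = n by rewrite size_rot.
have allP_s : all [pred p | 1 <= p <= n] s by apply/allP => p; rewrite smem.
have SA' : SA T' = map f s.
  pose e' := fun a b => lexle (suffix T' a) (suffix T' b).
  apply: (@sorted_eq_in _ e').
  - by move=> a b c _ _ _; apply: lexle_trans.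
  - move=> a b; rewrite /SA sT' !mem_sort !mem_iota => ha hb /andP[h1 h2].
    have := lexle_anti h1 h2 => /(congr1 size); rewrite !size_sfx ?sT'; lia.
  - by apply: sort_sorted => a b; apply: lexle_total.
  - rewrite sorted_map -(@eq_in_sorted _ [pred p | 1 <= p <= n] e) //.
    by move=> a b ha hb; rewrite -Hord.
  - rewrite /SA perm_sort ?size_rot ?sT' ?sT perm_sym.
    apply: (perm_trans (perm_map f Hperm)).
    have E1 : iota 1 n = 1 :: iota 2 n.-1 by case: (n) n2.
    rewrite {1}E1 map_cons.
    have -> : map f (iota 2 n.-1) = map predn (iota 2 n.-1).
      apply/eq_in_map => p; rewrite mem_iota => hp.
      rewrite /f modr_small //; lia.
    rewrite map_pred_iota /f /= /modr mod0n eqxx.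
    have -> : iota 1 n = rcons (iota 1 n.-1) n.
      by case: (n) n0 => // n' _; rewrite -cats1 -[in LHS](addn1 n') iotaD add1n.
    by rewrite perm_sym perm_rcons.
have pos : forall i, 1 <= i <= n -> 1 <= at1 s i <= n.
  move=> i hi; rewrite -smem /at1; apply: mem_nth; rewrite ss; lia.
have Pclosed : forall i, 1 <= i <= n -> at1 s i = modr n (1 + i.-1 * k).
  elim=> // i IH hi.
  case: i IH hi => [|i] IH hi; first by rewrite H1 modr_small //=; lia.
  rewrite Hrec; last by lia.
  rewrite IH; last by lia.
  apply: modr_eq; rewrite -modnDml modr_mod // modnDml /=.
  by congr (_ %% n); rewrite mulSn; lia.
have us : uniq s by rewrite (perm_uniq Hperm) iota_uniq.
have ns : n \in s by rewrite smem leqnn; lia.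
set j := index n s.
have jn : j < n by rewrite -ss index_mem.
have sfn : suffix T n = [:: true] by rewrite HTn hTn.
have Hchr : forall i, i < n -> chr T (nth 0 s i) = (j <= i).
  move=> i hi.
  have pin : nth 0 s i \in s by apply: mem_nth; rewrite ss.
  have := pin; rewrite smem => /andP[p1 pn].
  have [ij|ij|ij] := ltngtP i j.
  - have := sorted_ltn_nth etr 0 sorted_s; move=> /(_ i j); rewrite !inE ss.
    move=> /(_ hi jn ij); rewrite nth_index // /e sfn.
    have pn' : nth 0 s i != n.
      apply/eqP=> h; move: ij; rewrite /j -h index_uniq ?ss // ltnn //.
    rewrite suffix2 ?sT //; last by rewrite ltn_neqAle pn' pn.
    by rewrite lexle2_true => /negbTE ->; apply/esym/negbTE.
  - have := sorted_ltn_nth etr 0 sorted_s; move=> /(_ j i); rewrite !inE ss.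
    move=> /(_ jn hi ij); rewrite nth_index // /e sfn.
    have pn' : nth 0 s i != n.
      apply/eqP=> h; move: ij; rewrite /j -h index_uniq ?ss // ltnn //.
    rewrite suffix2 ?sT //; last by rewrite ltn_neqAle pn' pn.
    by rewrite lexle_true2.
  - by rewrite ij nth_index // hTn leqnn.
have Tmap : map (chr T) (iota 1 n) = T.
  apply: (@eq_from_nth _ false); first by rewrite size_map size_iota sT.
  move=> i; rewrite size_map size_iota => hi.
  by rewrite (nth_map 0) ?size_iota // nth_iota.
have jm : j = m.
  rewrite /m -Tmap count_map.
  have /permP <- := Hperm.
  rewrite -(mkseq_nth 0 s) ss /mkseq count_map.
  rewrite (@eq_in_count _ _ (fun i => i < j)); last first.
    by move=> i; rewrite mem_iota add0n /= => hi; rewrite Hchr // ltnNge.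
  by rewrite count_lt_iota; lia.
have hmk : (1 + m * k) %% n = 0.
  have := Pclosed m.+1; rewrite /= -jm /at1 /= nth_index // => /(_ ltac:(lia)).
  rewrite /modr; case: eqP => // _ h.
  have := ltn_pmod (1 + j * k) n0; rewrite -h ltnn //.
have atSA' : forall i, 1 <= i <= n -> at1 (SA T') i = f (at1 s i).
  by move=> i hi; rewrite SA' /at1 (nth_map 0) // ss; lia.
split.
  by move=> i hi; rewrite atSA'.
split.
  move=> i hi; rewrite atSA' // /f.
  have hr := modr_range (i + m) n0.
  rewrite Pclosed // Pclosed //.
  apply: modr_eq.
  have hpos := modr_range (1 + i.-1 * k) n0.
  rewrite -[1 + _ in RHS]/((2 + (modr n (i + m)).-1 * k).-1).
  apply: mod_pred; [lia | by rewrite add2n |].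
  rewrite modr_mod //.
  have Hr : (modr n (i+m)).-1 = (i+m).-1 %[mod n].
    by apply: mod_pred; [lia|lia|exact: modr_mod].
  have E2 : 2 + (modr n (i+m)).-1 * k = 2 + (i+m).-1 * k %[mod n].
    by rewrite -modnDmr -modnMml Hr modnMml modnDmr.
  rewrite E2.
  have -> : 2 + (i + m).-1 * k = (1 + i.-1 * k) + (1 + m * k).
    by move: hi; case: (i) => // i' _; rewrite addSn /= mulnDl; nia.
  by rewrite -[in RHS]modnDmr hmk addn0.
split.
  by rewrite atSA' ?leqnn // H1 /f /= /modr mod0n eqxx.
split.
  split => //; first by rewrite /SA perm_sort sT'.
  move=> i hi; rewrite !atSA' ?Hrec //; try lia.
  have hp := pos i ltac:(lia).
  rewrite /f; apply: modr_eq.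
  rewrite -modnDml modr_mod // modnDml.
  have := modr_range (at1 s i + k) n0 => hr.
  have -> : (modr n (at1 s i + k)).-1 = (at1 s i + k).-1 %[mod n].
    by apply: mod_pred; [lia|lia|exact: modr_mod].
  congr (_ %% n); lia.
rewrite /BWT SA' Es -map_comp sT' sT; apply/eq_in_map => p.
rewrite smem => hp /=.
have ha := modr_range p.-1 n0.
rewrite /f; set a := modr n p.-1.
have {}ha : 0 < a <= n by rewrite /a; exact: modr_range.
rewrite /chr TT' Tr2 nth_rcons sr.
have [a1|a2] : a = 1 \/ 2 <= a by lia.
  rewrite a1 /= /modr mod0n eqxx ltnn eqxx //.
rewrite (modr_small (x := a.-1)); last by lia.
case: a a2 ha => [|[|a]] //= _ ha.
by rewrite ifT //; lia.
Qed.
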